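(* Let $\gamma=\exp(z_\gamma Z)\in H_n$ for some $z_\gamma\in\mathbb R\setminus\{0\}$ and suppose $\sigma$ is a $\gamma$-periodic magnetic geodesic which is a one-parameter subgroup. Then $\sigma(t)=\exp(tz_0Z)$ for some $z_0\in\mathbb R\setminus\{0\}$. Moreover, for every $E>0$, the two curves $\sigma(t)=\exp(\pm tEZ)$ are $\gamma$-periodic magnetic geodesics of energy $E$, with periods $\omega=z_\gamma/(\pm E)$ respectively.
   Context: Let $\mathfrak h_n$ be the real Lie algebra with basis $X_1,\dots,X_n,Y_1,\dots,Y_n,Z$ whose only nonzero brackets among basis vectors are $[X_i,Y_i]=Z$, and $H_n$ the simply connected Lie group with Lie algebra $\mathfrak h_n$; $\exp(U)\exp(W)=\exp(U+W+\tfrac12[U,W])$. Fix $A_i>0$; $g$ is the left-invariant metric with orthonormal basis $\{X_i/\sqrt{A_i},Y_i/\sqrt{A_i},Z\}$. With $\{\alpha_i,\beta_i,\zeta\}$ the dual basis and $B\in\mathbb R$, $\Omega=d(B\zeta)$; magnetic geodesics solve $\nabla_{\sigma'}\sigma'=F\sigma'$, $g(Fu,v)=\Omega(u,v)$. The magnetic geodesics with $\sigma(0)=e$ are exactly $\sigma(t)=\exp(\sum x_iX_i+\sum y_iY_i+zZ)$ with, for parameters $(u_i,v_i,z_0)$: if $z_0\ne0$, $x_i=\frac{u_i}{z_0}\sin(\frac{z_0t}{A_i})-\frac{v_i}{z_0}(1-\cos(\frac{z_0t}{A_i}))$, $y_i=\frac{u_i}{z_0}(1-\cos(\frac{z_0t}{A_i}))+\frac{v_i}{z_0}\sin(\frac{z_0t}{A_i})$,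 $z=(z_0+B+\sum\frac{u_i^2+v_i^2}{2A_iz_0})t-\sum\frac{u_i^2+v_i^2}{2z_0^2}\sin(\frac{z_0t}{A_i})$; if $z_0=0$, $x_i=u_it/A_i$, $y_i=v_it/A_i$, $z=Bt$. The energy $E=|\sigma'|$ satisfies $E^2=\sum\frac{u_i^2+v_i^2}{A_i}+(z_0+B)^2$. For $\gamma\neq e$, $\sigma$ is $\gamma$-periodic with period $\omega\ne0$ if $\gamma\sigma(t)=\sigma(t+\omega)$ for all $t$. *)

(* Defs.v *)
From HB Require Import structures.
From mathcomp Require Import all_boot all_order all_algebra.
From mathcomp Require Import all_classical all_reals all_analysis.
Set Implicit Arguments. Unset Strict Implicit. Unset Printing Implicit Defensive.
Import Order.TTheory GRing.Theory Num.Theory.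
Local Open Scope ring_scope.

Section Heis.
Variables (R : realType) (n : nat).

(* A point of H_n in exponential coordinates:
   exp(sum x_i X_i + sum y_i Y_i + z Z) is represented by (x, y, z).
   The same triple also represents the Lie algebra element
   sum x_i X_i + sum y_i Y_i + z Z. *)
Record Hpt := mkH { hx : 'I_n -> R; hy : 'I_n -> R; hz : R }.

Definition He : Hpt := mkH (fun _ => 0) (fun _ => 0) 0.

(* exp(U) exp(W) = exp(U + W + 1/2 [U,W]),  [U,W] = (sum_i x_i y'_i - y_i x'_i) Z *)
Definition Hmul (p q : Hpt) : Hpt :=
  mkH (fun i => hx p i + hx q i) (fun i => hy p i + hy q i)
      (hz p + hz q + 2^-1 * \sum_(i < n) (hx p i * hy q i - hy p i * hx q i)).

Definition Hexp_scale (t : R) (W : Hpt) : Hpt :=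
  mkH (fun i => t * hx W i) (fun i => t * hy W i) (t * hz W).

Definition expZ (c : R) : Hpt := mkH (fun _ => 0) (fun _ => 0) c.

(* The magnetic geodesic through e with parameters (u, v, z0),
   as given explicitly in the paper. *)
Definition geod_e (A : 'I_n -> R) (B : R) (u v : 'I_n -> R) (z0 : R) (t : R) : Hpt :=
  if z0 == 0 then
    mkH (fun i => u i * t / A i) (fun i => v i * t / A i) (B * t)
  else
    mkH (fun i => u i / z0 * sin (z0 * t / A i) - v i / z0 * (1 - cos (z0 * t / A i)))
        (fun i => u i / z0 * (1 - cos (z0 * t / A i)) + v i / z0 * sin (z0 * t / A i))
        ((z0 + B + \sum_(i < n) (u i ^+ 2 + v i ^+ 2) / (2 * A i * z0)) * t
         - \sum_(i < n) (u i ^+ 2 + v i ^+ 2) / (2 * z0 ^+ 2) * sin (z0 * t / A i)).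

Definition geod_energy_sq (A : 'I_n -> R) (B : R) (u v : 'I_n -> R) (z0 : R) : R :=
  \sum_(i < n) (u i ^+ 2 + v i ^+ 2) / A i + (z0 + B) ^+ 2.

(* sigma : R -> H_n is a magnetic geodesic: by left-invariance of g and Omega,
   it is the left translate by sigma(0) of a magnetic geodesic through e. *)
Definition IsMagGeod (A : 'I_n -> R) (B : R) (sigma : R -> Hpt) : Prop :=
  exists (u v : 'I_n -> R) (z0 : R),
    forall t, sigma t = Hmul (sigma 0) (geod_e A B u v z0 t).

Definition IsMagGeodEnergy (A : 'I_n -> R) (B : R) (sigma : R -> Hpt) (E : R) : Prop :=
  0 <= E /\
  exists (u v : 'I_n -> R) (z0 : R),
    (forall t, sigma t = Hmul (sigma 0) (geod_e A B u v z0 t)) /\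
    E ^+ 2 = geod_energy_sq A B u v z0.

Definition gamma_periodic (gamma : Hpt) (sigma : R -> Hpt) (omega : R) : Prop :=
  gamma <> He /\ omega != 0 /\ forall t, Hmul gamma (sigma t) = sigma (t + omega).

Definition IsOneParamSubgroup (sigma : R -> Hpt) : Prop :=
  exists W : Hpt, forall t, sigma t = Hexp_scale t W.

End Heis.

(* Main.v *)
Require Import Defs.
From HB Require Import structures.
From mathcomp Require Import all_boot all_order all_algebra.
From mathcomp Require Import all_classical all_reals all_analysis.
Import Order.TTheory GRing.Theory Num.Theory.
Local Open Scope ring_scope.

Lemma Hpt_eq (R : realType) (n : nat) (p q : Hpt R n) :
  hx p =1 hx q -> hy p =1 hy q -> hz p = hz q -> p = q.
Proof.
case: p => x y z; case: q => x' y' z' /= hx hy hz.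
by rewrite (funext hx) (funext hy) hz.
Qed.

Lemma Hmul_expZ (R : realType) (n : nat) (a : R) (p : Hpt R n) :
  Hmul (expZ n a) p = mkH (hx p) (hy p) (a + hz p).
Proof.
apply: Hpt_eq => [i|i|] /=; first by rewrite add0r.
  by rewrite add0r.
by rewrite big1 ?mulr0 ?addr0 // => i _; rewrite !mul0r subr0.
Qed.

Lemma sum00 (R : realType) (n : nat) (f : 'I_n -> R) :
  \sum_(i < n) ((0:R) ^+ 2 + 0 ^+ 2) / f i = 0.
Proof. by rewrite big1 // => i _; rewrite expr0n /= addr0 mul0r. Qed.

Lemma geod_zero (R : realType) (n : nat) (A : 'I_n -> R) (B E t : R) :
  geod_e A B (fun _ => 0) (fun _ => 0) (E - B) t = expZ n (t * E).
Proof.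
rewrite /geod_e; case: ifP => [/eqP h|h].
  have -> : B = E by apply/eqP; rewrite eq_sym -subr_eq0 h.
  by apply: Hpt_eq => [i|i|] /=; rewrite ?mul0r // mulrC.
apply: Hpt_eq => [i|i|] /=; rewrite ?mul0r ?subrr ?addr0 //.
rewrite sum00.
rewrite (_ : \sum_(i < n) _ = 0); last first.
  by rewrite big1 // => i _; rewrite expr0n /= addr0 !mul0r.
by rewrite subrK addr0 subr0 mulrC.
Qed.
Lemma part2 (R : realType) (n : nat) (A : 'I_n -> R) (B zg : R) (hzg : zg != 0) (E : R) :
  E != 0 -> 0 <= `|E| ->
  (IsMagGeodEnergy A B (fun t => expZ n (t * E)) `|E| /\
   gamma_periodic (expZ n zg) (fun t => expZ n (t * E)) (zg / E)).
Proof.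
move=> hE hE0; split.
  split => //; exists (fun _ => 0), (fun _ => 0), (E - B); split.
    by move=> t; rewrite Hmul_expZ geod_zero /= mul0r add0r.
  rewrite /geod_energy_sq big1 ?add0r ?subrK ?real_normK ?num_real //.
  by move=> i _; rewrite expr0n /= addr0 mul0r.
split; first by move=> h; move: hzg; have /= -> := congr1 (@hz R n) h; rewrite eqxx.
split; first by rewrite mulf_neq0 // invr_eq0.
move=> t; rewrite Hmul_expZ /=; congr mkH.
by rewrite mulrDl divfK // addrC.
Qed.

Theorem lemma4p4 (R : realType) (n : nat) (hn : (0 < n)%N)
  (A : 'I_n -> R) (hA : forall i, 0 < A i) (B : R)
  (zg : R) (hzg : zg != 0) :
  (forall sigma : R -> Hpt R n,
      IsMagGeod A B sigma ->
      (exists omega, gamma_periodic (expZ n zg) sigma omega) ->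
      IsOneParamSubgroup sigma ->
      exists z0 : R, z0 != 0 /\ forall t, sigma t = expZ n (t * z0))
  /\
  (forall E : R, 0 < E ->
      (IsMagGeodEnergy A B (fun t => expZ n (t * E)) E /\
       gamma_periodic (expZ n zg) (fun t => expZ n (t * E)) (zg / E))
   /\ (IsMagGeodEnergy A B (fun t => expZ n (t * - E)) E /\
       gamma_periodic (expZ n zg) (fun t => expZ n (t * - E)) (zg / - E))).
Proof.
split.
  move=> sigma _ [om [_ [hom hper]]] [W hW].
  have h0 := hper 0; rewrite !hW Hmul_expZ /Hexp_scale add0r in h0.
  case: h0 => hxx hyy hzz.
  have hWz : om * hz W = zg by move: hzz; rewrite mul0r addr0 ?add0r => <-.
  exists (hz W); split.
    by apply: contraNneq hzg => h; rewrite -hWz h mulr0.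
  move=> t; rewrite hW; apply: Hpt_eq => [i|i|] /=; last by [].
    have := congr1 (fun f => f i) hxx => /= /eqP.
    rewrite ?add0r ?mulrDl ?mul0r ?add0r eq_sym mulf_eq0 (negbTE hom) /=.
    by move/eqP ->; rewrite mulr0.
  have := congr1 (fun f => f i) hyy => /= /eqP.
  rewrite ?add0r ?mulrDl ?mul0r ?add0r eq_sym mulf_eq0 (negbTE hom) /=.
  by move/eqP ->; rewrite mulr0.
move=> E hE; split.
  have := @part2 R n A B zg hzg E (lt0r_neq0 hE) (normr_ge0 _).
  by rewrite gtr0_norm.
have := @part2 R n A B zg hzg (- E) _ (normr_ge0 _).
rewrite normrN gtr0_norm //; apply; by rewrite oppr_eq0 lt0r_neq0.
Qed.
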